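(* There is a $\mathbb{Q}$-valued function $\eta$ on the set of isomorphism classes of finite oriented trees such that: (i) if $T$ is a tree with one vertex and no edges, then $\eta(T)=1$; (ii) if an oriented tree $T'$ (resp. $U$) is obtained from an oriented tree $T$ by reversing the orientation of an edge $e$ (resp. by contracting $e$ to a point), then $\eta(T)+\eta(T')+\eta(U)=0$; (iii) if an oriented tree $T'$ (resp. $T''$) is obtained from an oriented tree $T$ by replacing two distinct edges $ab,ac$ with common origin $a$ by $ab,bc$ (resp. by $ac,cb$), and $U$ is obtained from $T$ by identifying $b$ with $c$ and $ab$ with $ac$, then $\eta(T)=\eta(T')+\eta(T'')+\eta(U)$.
   Context: An oriented tree is a finite tree each of whose edges is given an orientation; an edge $ab$ means an edge oriented from vertex $a$ to vertex $b$. Isomorphism of oriented trees preserves edge orientations. *)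

(* Defs.v *)
From HB Require Import structures.
From mathcomp Require Import all_boot all_order all_algebra.
Set Implicit Arguments. Unset Strict Implicit. Unset Printing Implicit Defensive.

(* A finite oriented graph on the vertex set 'I_nv, with edge set ed :
   (x, y) \in ed means an edge oriented from x to y. *)
Record ograph := OGraph { nv : nat; ed : {set 'I_nv * 'I_nv} }.

Definition uadj (T : ograph) : rel 'I_(nv T) :=
  fun u v => ((u, v) \in ed T) || ((v, u) \in ed T).

Definition is_otree (T : ograph) : Prop :=
  [/\ 0 < nv T,
      (forall x, (x, x) \notin ed T),
      (forall x y, (x, y) \in ed T -> (y, x) \notin ed T),
      (forall x y : 'I_(nv T), connect (@uadj T) x y)
    & #|ed T| = (nv T).-1 ].

Definition oiso (T1 T2 : ograph) : Prop :=
  exists g : 'I_(nv T1) -> 'I_(nv T2),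
    bijective g /\ forall x y, ((x, y) \in ed T1) = ((g x, g y) \in ed T2).

Definition reverse_edge (T : ograph) (a b : 'I_(nv T)) : ograph :=
  @OGraph (nv T) ((ed T :\ (a, b)) :|: [set (b, a)]).

Definition replace_edge (T : ograph) (x y u v : 'I_(nv T)) : ograph :=
  @OGraph (nv T) ((ed T :\ (x, y)) :|: [set (u, v)]).

(* [quotient_by T b c S E] : S is obtained from T by identifying the vertices
   b and c (and nothing else) via a surjection f, its edge set being the image
   of the edge set E (a subset of the edges of T) under f. *)
Definition quotient_by (T : ograph) (b c : 'I_(nv T))
    (E : {set 'I_(nv T) * 'I_(nv T)}) (S : ograph) : Prop :=
  exists f : 'I_(nv T) -> 'I_(nv S),
    [/\ (forall z, exists x, f x = z),
        f b = f c,
        (forall x y, f x = f y -> x = y \/ (x = b /\ y = c) \/ (x = c /\ y = b))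
      & ed S = [set (f e.1, f e.2) | e in E] ].

Definition contract_edge (T : ograph) (a b : 'I_(nv T)) (U : ograph) : Prop :=
  quotient_by a b (ed T :\ (a, b)) U.

Definition identify_ends (T : ograph) (b c : 'I_(nv T)) (U : ograph) : Prop :=
  quotient_by b c (ed T) U.

(* Main.v *)
Require Import Defs.
From mathcomp Require Import all_boot all_order all_algebra.
Set Implicit Arguments. Unset Strict Implicit. Unset Printing Implicit Defensive.
Import GRing.Theory Num.Theory.

Definition rep (N : nat) (f : nat -> rat) :=
  exists c : nat -> rat, forall t, f t = (\sum_(m < N) c m * ('C(t, m))%:R)%R.

Lemma rep_ext N f g : f =1 g -> rep N f -> rep N g.
Proof. move=> fg [c Hc]; exists c => t; by rewrite -fg. Qed.

Lemma rep0 N : rep N (fun _ => 0%R).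
Proof. exists (fun _ => 0%R) => t; rewrite big1 // => i _; exact: mul0r. Qed.

Lemma repD N f g : rep N f -> rep N g -> rep N (fun t => f t + g t)%R.
Proof.
case=> c1 H1 [c2 H2]; exists (fun m => c1 m + c2 m)%R => t.
by rewrite H1 H2 -big_split /=; apply: eq_bigr => i _; rewrite mulrDl.
Qed.

Lemma rep_sum N (I : finType) (P : pred I) (F : I -> nat -> rat) :
  (forall i, P i -> rep N (F i)) -> rep N (fun t => \sum_(i | P i) F i t)%R.
Proof.
move=> H; rewrite /index_enum.
elim: (Finite.enum I) => [|i r IH].
  by apply: rep_ext (rep0 N) => t; rewrite big_nil.
case Pi: (P i).
  apply: rep_ext (repD (H i Pi) IH) => t; by rewrite big_cons Pi.
by apply: rep_ext IH => t; rewrite big_cons Pi.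
Qed.

Lemma rep_anti N f g : rep N g -> (forall t, f t.+1 = f t + g t)%R -> rep N.+1 f.
Proof.
case=> c Hc Hf; exists (fun m => if m is m'.+1 then c m' else f 0)%R.
elim=> [|t IH].
  rewrite big_ord_recl /= bin0 mulr1 big1 ?addr0 // => i _.
  by rewrite bin0n /= mulr0.
rewrite Hf IH Hc !big_ord_recl /= !bin0 -addrA; congr (_ + _)%R.
rewrite -big_split /=; apply: eq_bigr => i _.
by rewrite binS natrD mulrDr.
Qed.

Local Open Scope ring_scope.
Definition binp (m : nat) : {poly rat} :=
  (m`!%:R)^-1 *: \prod_(i < m) ('X - (i%:R)%:P).

Lemma prod_ffact (t m : nat) : (\prod_(i < m) (t%:R - i%:R) = (t ^_ m)%:R :> rat)%R.
Proof.
elim: m => [|m IH]; first by rewrite big_ord0 ffactn0.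
rewrite big_ord_recr /= IH ffactnSr natrM.
case: (leqP m t) => [le|lt]; first by rewrite natrB.
by rewrite ffact_small // !mul0r.
Qed.

Lemma binpE m t : (binp m).[t%:R] = ('C(t, m))%:R.
Proof.
rewrite /binp hornerZ horner_prod.
under eq_bigr => i _ do rewrite hornerXsubC.
rewrite prod_ffact -bin_ffact natrM mulrC mulfK //.
by rewrite pnatr_eq0 -lt0n fact_gt0.
Qed.

Definition polyf (f : nat -> rat) := exists p : {poly rat}, forall t, p.[t%:R] = f t.

Lemma rep_polyf N f : rep N f -> polyf f.
Proof.
case=> c Hc; exists (\sum_(m < N) c m *: binp m) => t.
rewrite horner_sum Hc; apply: eq_bigr => i _; by rewrite hornerZ binpE.
Qed.

Lemma poly_nat_eq (p q : {poly rat}) :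
  (forall t : nat, p.[t%:R] = q.[t%:R]) -> p = q.
Proof.
move=> H; apply/eqP; rewrite -subr_eq0; apply/negPn/negP => Hn.
have := @max_poly_roots _ _ [seq i%:R | i <- iota 0 (size (p - q))] Hn.
rewrite size_map size_iota ltnn => /(_ _ _)/notF; apply.
  by apply/allP => x /mapP [i _ ->]; rewrite /root hornerD hornerN H subrr.
rewrite map_inj_uniq ?iota_uniq // => i j /eqP; rewrite eqr_nat => /eqP //.
Qed.
Local Close Scope ring_scope.
Definition good n (E : {set 'I_n * 'I_n}) (W : {set 'I_n}) t (x : {ffun 'I_n -> 'I_t.+1}) : bool :=
  [forall v, (0 < x v) == (v \in W)] &&
  [forall e in E, (e.1 \in W) ==> (e.2 \in W) ==> (x e.1 < x e.2)].

Lemma goodP n (E : {set 'I_n * 'I_n}) (W : {set 'I_n}) t (x : {ffun 'I_n -> 'I_t.+1}) :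
  reflect ((forall v, (0 < x v) = (v \in W)) /\
           (forall e, e \in E -> e.1 \in W -> e.2 \in W -> x e.1 < x e.2))
          (good E W x).
Proof.
apply: (iffP andP) => [[/forallP H1 /forall_inP H2]|[H1 H2]]; split.
- by move=> v; move: (H1 v) => /eqP.
- by move=> e eE e1 e2; have := H2 e eE; rewrite e1 e2.
- by apply/forallP => v; rewrite H1.
- by apply/forall_inP => e eE; apply/implyP => e1; apply/implyP; apply: H2.
Qed.

Definition cnt n E W t := #|[set x : {ffun 'I_n -> 'I_t.+1} | @good n E W t x]|.

Definition valid n (E : {set 'I_n * 'I_n}) (W S : {set 'I_n}) :=
  [forall e in E, ~~ ((e.1 \in S) && (e.2 \in W))].

Definition top n t (x : {ffun 'I_n -> 'I_t.+2}) : {set 'I_n} :=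
  [set v | val (x v) == t.+1].

Definition liftf n t (S : {set 'I_n}) (y : {ffun 'I_n -> 'I_t.+1}) : {ffun 'I_n -> 'I_t.+2} :=
  [ffun v => if v \in S then ord_max else widen_ord (leqnSn _) (y v)].

Lemma cnt_slice n (E : {set 'I_n * 'I_n}) (W S : {set 'I_n}) t :
  #|[set x : {ffun 'I_n -> 'I_t.+2} | good E W x && (top x == S)]| =
  if (S \subset W) && valid E W S then @cnt n E (W :\: S) t else 0.
Proof.
case: ifP => [/andP [SW /forall_inP VS] | NV].
  rewrite /cnt -[RHS](@card_in_imset _ _ (@liftf n t S)).
    apply: eq_card => x; rewrite inE; apply/andP/imsetP.
      case=> /goodP [H1 H2] /eqP tS.
      have xS v : (v \in S) = (val (x v) == t.+1) by rewrite -tS inE.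
      have xlt v : v \notin S -> x v < t.+1.
        move=> vS; have := ltn_ord (x v); rewrite ltnS leq_eqVlt -xS (negbTE vS) //.
      exists [ffun v => inord (if v \in S then 0 else x v) : 'I_t.+1].
        rewrite inE; apply/goodP; split.
          move=> v; rewrite ffunE inE; case: (boolP (v \in S)) => vS /=.
            by rewrite inordK.
          by rewrite inordK ?xlt // H1.
        move=> e eE; rewrite !inE => /andP [e1S e1W] /andP [e2S e2W].
        by rewrite !ffunE (negbTE e1S) (negbTE e2S) !inordK ?xlt // H2.
      apply/ffunP => v; rewrite !ffunE; case: (boolP (v \in S)) => vS.
        by apply: val_inj => /=; apply/eqP; rewrite -xS.
      by apply: val_inj => /=; rewrite inordK ?xlt.
    case=> y; rewrite inE => /goodP [H1 H2] ->; split.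
      apply/goodP; split.
        move=> v; rewrite ffunE; case: (boolP (v \in S)) => vS /=.
          by rewrite (subsetP SW).
        by rewrite H1 inE vS.
      move=> e eE e1W e2W; rewrite !ffunE.
      case: (boolP (e.1 \in S)) => e1S.
        by have := VS e eE; rewrite e1S e2W.
      case: (boolP (e.2 \in S)) => e2S /=.
        exact: ltn_ord.
      by apply: H2; rewrite // inE ?e1S ?e2S.
    apply/eqP/setP => v; rewrite inE ffunE.
    case: (boolP (v \in S)) => vS /=; first by rewrite eqxx.
    by rewrite ltn_eqF.
  move=> y1 y2; rewrite !inE => /goodP [H1 _] /goodP [H1' _] /ffunP E12.
  apply/ffunP => v; have := E12 v; rewrite !ffunE.
  case: (boolP (v \in S)) => vS.
    move=> _; apply: val_inj => /=.
    have := H1 v; have := H1' v; rewrite inE vS /=.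
    move=> /negbT; rewrite -leqNgt leqn0 => /eqP h2.
    by move=> /negbT; rewrite -leqNgt leqn0 => /eqP h1; rewrite h1 h2.
  by move/(congr1 val) => /= /val_inj.
apply/eqP; rewrite cards_eq0; apply/eqP/setP => x; rewrite !inE.
apply/negbTE; apply/negP => /andP [/goodP [H1 H2] /eqP tS].
move: NV; have -> : S \subset W.
  by apply/subsetP => v; rewrite -tS inE -H1 => /eqP ->.
have -> // : valid E W S.
apply/forall_inP => e eE; apply/negP => /andP [e1S e2W].
have e1W : e.1 \in W by rewrite -H1; move: e1S; rewrite -tS inE => /eqP ->.
have := H2 e eE e1W e2W; move: e1S; rewrite -tS inE => /eqP ->.
by rewrite ltnNge -ltnS ltn_ord.
Qed.

Lemma cnt_step n (E : {set 'I_n * 'I_n}) (W : {set 'I_n}) t :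
  cnt E W t.+1 = \sum_(S : {set 'I_n} | (S \subset W) && valid E W S) cnt E (W :\: S) t.
Proof.
rewrite /cnt -sum1_card (partition_big (@top n t) predT) //=.
rewrite [RHS]big_mkcond /=; apply: eq_bigr => S _.
rewrite -cnt_slice -sum1_card; apply: eq_bigl => x; by rewrite !inE.
Qed.

From mathcomp Require Import zify.

Lemma cnt_rep n (E : {set 'I_n * 'I_n}) k :
  forall W : {set 'I_n}, #|W| < k -> rep k (fun t => ((cnt E W t)%:R)%R).
Proof.
elim: k => [//|k IH] W Wk.
pose g t := (\sum_(S : {set 'I_n} | ((S \subset W) && valid E W S) && (S != set0))
              (((cnt E (W :\: S) t)%:R)%R : rat))%R.
apply: (@rep_anti _ _ g).
  apply: rep_sum => S /andP [/andP [SW _] S0]; apply: IH.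
  rewrite cardsD (setIidPr SW).
  have : 0 < #|S| by rewrite card_gt0.
  have : #|S| <= #|W| by apply: subset_leq_card.
  lia.
move=> t; rewrite cnt_step natr_sum (bigD1 set0) /=; last first.
  by rewrite sub0set; apply/forall_inP => e _; rewrite inE.
by rewrite setD0.
Qed.

Definition okE n (E : {set 'I_n * 'I_n}) t (x : {ffun 'I_n -> 'I_t.+1}) :=
  [forall e in E, x e.1 < x e.2].
Definition posf n t (x : {ffun 'I_n -> 'I_t.+1}) := [forall v, 0 < x v].

Lemma goodT n (E : {set 'I_n * 'I_n}) t (x : {ffun 'I_n -> 'I_t.+1}) :
  good E setT x = posf x && okE E x.
Proof.
apply/goodP/andP => [[H1 H2]|[/forallP H1 /forall_inP H2]]; split.
- by apply/forallP => v; rewrite H1 inE.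
- by apply/forall_inP => e eE; apply: H2; rewrite ?inE.
- by move=> v; rewrite H1 inE.
- by move=> e eE _ _; apply: H2.
Qed.

Lemma okED1 n (E : {set 'I_n * 'I_n}) t (x : {ffun 'I_n -> 'I_t.+1}) e0 :
  e0 \in E -> okE E x = (x e0.1 < x e0.2) && okE (E :\ e0) x.
Proof.
move=> e0E; apply/forall_inP/andP => [H|[H0 /forall_inP H] e eE].
  split; first exact: H.
  by apply/forall_inP => e; rewrite !inE => /andP [_]; apply: H.
by case: (eqVneq e e0) => [->//|ne]; apply: H; rewrite !inE ne.
Qed.

Lemma okEU1 n (E : {set 'I_n * 'I_n}) t (x : {ffun 'I_n -> 'I_t.+1}) e1 :
  okE (E :|: [set e1]) x = (x e1.1 < x e1.2) && okE E x.
Proof.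
apply/forall_inP/andP => [H|[H0 /forall_inP H] e].
  split; first by apply: H; rewrite !inE eqxx orbT.
  by apply/forall_inP => e eE; apply: H; rewrite inE eE.
by rewrite !inE => /orP [/H//|/eqP ->].
Qed.

Lemma card_sum (T : finType) (P : pred T) :
  #|[set x | P x]| = \sum_x (P x : nat).
Proof.
rewrite -sum1_card big_mkcond /=; apply: eq_bigr => x _; rewrite inE.
by case: (P x).
Qed.

Lemma quot_cnt (T : ograph) (b c : 'I_(nv T)) E' (U : ograph) t :
  quotient_by b c E' U ->
  #|[set x : {ffun 'I_(nv T) -> 'I_t.+1} | good E' setT x && (x b == x c)]| =
  cnt (ed U) setT t.
Proof.
case=> f [fsurj fbc finj edU].
pose g z := odflt b [pick x | f x == z].
have fg z : f (g z) = z.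
  rewrite /g; case: pickP => [x /eqP //|none].
  by case: (fsurj z) => x fx; have := none x; rewrite fx eqxx.
pose phi (y : {ffun 'I_(nv U) -> 'I_t.+1}) := [ffun v => y (f v)].
rewrite /cnt -[RHS](@card_in_imset _ _ phi); last first.
  move=> y1 y2 _ _ /ffunP H; apply/ffunP => z.
  by have := H (g z); rewrite !ffunE fg.
apply: eq_card => x; rewrite inE; apply/andP/imsetP.
  case; rewrite goodT => /andP [/forallP pos /forall_inP ok] /eqP xbc.
  have xgf v : x (g (f v)) = x v.
    case: (finj _ _ (fg (f v))) => [->//|[[-> ->]|[-> ->]]] //.
  exists [ffun z => x (g z)].
    rewrite inE goodT; apply/andP; split.
      by apply/forallP => z; rewrite ffunE.
    apply/forall_inP => e'; rewrite edU => /imsetP [e eE ->] /=.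
    by rewrite !ffunE !xgf; apply: ok.
  by apply/ffunP => v; rewrite !ffunE xgf.
case=> y; rewrite inE goodT => /andP [/forallP pos /forall_inP ok] ->.
split; last by rewrite !ffunE fbc.
rewrite goodT; apply/andP; split.
  by apply/forallP => v; rewrite ffunE.
apply/forall_inP => e eE; rewrite !ffunE.
by apply: (ok (f e.1, f e.2)); rewrite edU; apply/imsetP; exists e.
Qed.

Lemma cnt_prod n (E : {set 'I_n * 'I_n}) (A : {set 'I_n}) t :
  (forall e, e \in E -> (e.1 \in A) = (e.2 \in A)) ->
  cnt E setT t = cnt E A t * cnt E (~: A) t.
Proof.
move=> Hc.
pose merge (p : {ffun 'I_n -> 'I_t.+1} * {ffun 'I_n -> 'I_t.+1}) :=
  [ffun v => if v \in A then p.1 v else p.2 v].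
have zero (B : {set 'I_n}) (y : {ffun 'I_n -> 'I_t.+1}) v :
  good E B y -> v \notin B -> y v = ord0.
  move=> /goodP [H _] vB; apply: val_inj => /=.
  by move: (H v); rewrite (negbTE vB) => /negbT; rewrite -leqNgt leqn0 => /eqP.
rewrite /cnt -cardsX -[RHS](@card_in_imset _ _ merge); last first.
  move=> [y1 z1] [y2 z2]; rewrite !inE /= => /andP [g1 h1] /andP [g2 h2] /ffunP H.
  congr pair; apply/ffunP => v; have := H v; rewrite !ffunE /=;
    case: (boolP (v \in A)) => vA //.
  - by rewrite (zero _ _ _ g1 vA) (zero _ _ _ g2 vA).
  - by rewrite (zero _ _ _ h1) ?(zero _ _ _ h2) ?inE ?vA.
apply: eq_card => x; rewrite inE; apply/idP/imsetP.
  move=> /goodP [H1 H2].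
  exists ([ffun v => if v \in A then x v else ord0],
          [ffun v => if v \in A then ord0 else x v]).
    rewrite !inE /=; apply/andP; split; apply/goodP; split.
    - by move=> v; rewrite ffunE; case: (v \in A) => //; rewrite H1 inE.
    - by move=> e eE e1 e2; rewrite !ffunE e1 e2; apply: H2; rewrite ?inE.
    - by move=> v; rewrite ffunE inE; case: (v \in A) => //; rewrite H1 inE.
    - move=> e eE; rewrite !inE => e1 e2; rewrite !ffunE (negbTE e1) (negbTE e2).
      by apply: H2; rewrite ?inE.
  by apply/ffunP => v; rewrite !ffunE; case: (v \in A).
case=> [[y z]]; rewrite !inE /= => /andP [/goodP [Hy1 Hy2] /goodP [Hz1 Hz2]] ->.
apply/goodP; split.
  by move=> v; rewrite ffunE inE; case: (boolP (v \in A)) => vA;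
    [rewrite Hy1 | rewrite Hz1 inE].
move=> e eE _ _; rewrite !ffunE -(Hc e eE).
case: (boolP (e.1 \in A)) => e1A.
  by apply: Hy2; rewrite // -(Hc e eE).
by apply: Hz2; rewrite // inE ?(Hc e eE) // -(Hc e eE).
Qed.

Lemma cnt_zero n (E : {set 'I_n * 'I_n}) (A : {set 'I_n}) a :
  a \in A -> cnt E A 0 = 0.
Proof.
move=> aA; apply/eqP; rewrite cards_eq0; apply/eqP/setP => x; rewrite !inE.
apply/negbTE/negP => /goodP [H _]; have := H a; rewrite aA.
by case: (x a) => [[|]].
Qed.

Lemma conn_edges n (E : {set 'I_n * 'I_n}) (r : 'I_n) :
  (forall v, connect (@uadj (@OGraph n E)) r v) -> n.-1 <= #|E|.
Proof.
move=> Hc; set e := @uadj (@OGraph n E).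
pose R k := iter k (fun S : {set 'I_n} => S :|: [set w | [exists u in S, e u w]]) [set r].
have Rpath p : forall x j, x \in R j -> path e x p -> last x p \in R (j + size p).
  elim: p => [|y p IH] x j xR /=; first by rewrite addn0.
  move=> /andP [exy py]; rewrite -addSnnS; apply: IH py.
  rewrite /= inE; apply/orP; right; rewrite inE; apply/existsP; exists x.
  by rewrite xR exy.
have exR v : exists k, v \in R k.
  have /connectP [p pp ->] := Hc v; exists (size p).
  by apply: (Rpath p r 0) => //; rewrite /= inE.
pose d v := ex_minn (exR v).
have dmin v k : v \in R k -> d v <= k.
  by move=> vk; rewrite /d; case: ex_minnP => m _; apply.
have dprop v : v != r -> exists u, e u v && (d u < d v).
  move=> vr; rewrite /d; case: ex_minnP => k vk kmin.
  case: k vk kmin => [|k] vk kmin; first by move: vk; rewrite /= inE (negbTE vr).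
  move: vk; rewrite /= inE => /orP [vk|].
    by have := kmin _ vk; rewrite ltnn.
  rewrite inE => /existsP [u /andP [uk euv]]; exists u; rewrite euv /=.
  by rewrite ltnS; apply: dmin.
pose cond v (f : 'I_n * 'I_n) := ((f.1 == v) && (d f.2 < d v)) || ((f.2 == v) && (d f.1 < d v)).
pose phi v := odflt (r, r) [pick f in E | cond v f].
have phiP v : v != r -> (phi v \in E) && cond v (phi v).
  move=> vr; rewrite /phi; case: pickP => [f /andP [fE cf]|none]; first by rewrite /= fE cf.
  case: (dprop v vr) => u /andP [euv duv].
  move: euv; rewrite /e /uadj /= => /orP [uvE|vuE].
    by have := none (u, v); rewrite uvE /cond /= eqxx duv orbT.
  by have := none (v, u); rewrite vuE /cond /= eqxx duv.
have -> : n.-1 = #|[set~ r]| by rewrite cardsC1 card_ord.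
rewrite -(@card_in_imset _ _ phi).
  apply: subset_leq_card; apply/subsetP => f /imsetP [v]; rewrite !inE => vr ->.
  by case/andP: (phiP v vr).
move=> v w; rewrite !inE => vr wr eq.
have /andP [_ cv] := phiP v vr; have /andP [_ cw] := phiP w wr.
move: cv cw; rewrite -eq; move: (phi v) => f; rewrite /cond.
case/orP => /andP [/eqP h1 h2]; case/orP => /andP [/eqP h3 h4]; subst v w => //.
- by have := ltn_trans h2 h4; rewrite ltnn.
- by have := ltn_trans h2 h4; rewrite ltnn.
Qed.

Lemma tree_cut (T : ograph) (a b : 'I_(nv T)) :
  is_otree T -> (a, b) \in ed T ->
  ~~ connect (@uadj (@OGraph (nv T) (ed T :\ (a, b)))) a b.
Proof.
case=> n0 _ _ conn card abE; apply/negP => Cab.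
set eF := @uadj (@OGraph (nv T) (ed T :\ (a, b))).
have symF : symmetric eF by move=> u w; rewrite /eF /uadj /= orbC.
have Cba : connect eF b a by rewrite (sym_connect_sym symF).
have sub : subrel (@uadj T) (connect eF).
  move=> u w; rewrite /uadj => /orP [uw|wu].
    case: (eqVneq (u, w) (a, b)) => [[-> ->] //|ne].
    by apply: connect1; rewrite /eF /uadj /= !inE ne uw.
  case: (eqVneq (w, u) (a, b)) => [[-> ->] //|ne].
  by apply: connect1; rewrite /eF /uadj /= !inE ne wu orbT.
have Call v : connect eF a v by apply: (connect_sub sub); apply: conn.
have h : (nv T).-1 <= #|ed T :\ (a, b)| := conn_edges Call.
rewrite (cardsD1 (a, b) (ed T)) abE in card.
move: card; rewrite add1n => card.
by move: h; rewrite -card ltnn.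
Qed.

Lemma cnt_iso (T1 T2 : ograph) t :
  oiso T1 T2 -> cnt (ed T1) setT t = cnt (ed T2) setT t.
Proof.
case=> g [[h gh hg] He].
pose psi (y : {ffun 'I_(nv T2) -> 'I_t.+1}) := [ffun v => y (g v)].
rewrite /cnt -[RHS](@card_in_imset _ _ psi); last first.
  move=> y1 y2 _ _ /ffunP H; apply/ffunP => z.
  by have := H (h z); rewrite !ffunE hg.
apply: eq_card => x; rewrite inE; apply/idP/imsetP.
  rewrite goodT => /andP [/forallP pos /forall_inP ok].
  exists [ffun z => x (h z)].
    rewrite inE goodT; apply/andP; split.
      by apply/forallP => z; rewrite ffunE.
    apply/forall_inP => [[z1 z2]] zE; rewrite !ffunE /=.
    apply: (ok (h z1, h z2)); by rewrite He /= !hg.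
  by apply/ffunP => v; rewrite !ffunE gh.
case=> y; rewrite inE !goodT => /andP [/forallP pos /forall_inP ok] ->.
apply/andP; split.
  by apply/forallP => v; rewrite ffunE.
apply/forall_inP => [[u w]] uwE; rewrite !ffunE /=.
by apply: (ok (g u, g w)); rewrite -He.
Qed.

Lemma cnt_pt n (E : {set 'I_n * 'I_n}) t : n = 1 -> E = set0 -> cnt E setT t = t.
Proof.
move=> n1; subst n => ->; rewrite /cnt.
have -> : [set x : {ffun 'I_1 -> 'I_t.+1} | good set0 setT x] =
          (fun i => [ffun _ => i]) @: [set~ ord0].
  apply/setP => x; rewrite inE goodT; apply/idP/imsetP.
    move=> /andP [/forallP pos _]; exists (x ord0).
      by rewrite !inE; apply/negP => /eqP h; have := pos ord0; rewrite h.
    by apply/ffunP => v; rewrite ffunE ord1.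
  case=> i; rewrite !inE => i0 ->; apply/andP; split.
    by apply/forallP => v; rewrite ffunE lt0n; move: i0; apply: contra => /eqP h;
      apply/eqP/val_inj.
  by apply/forall_inP => e; rewrite inE.
rewrite card_in_imset ?cardsC1 ?card_ord //.
by move=> i j _ _ /ffunP /(_ ord0); rewrite !ffunE.
Qed.

From Stdlib Require Import ClassicalEpsilon.

Local Open Scope ring_scope.

Definition cntG (G : ograph) t := cnt (ed G) setT t.

Lemma polyG (G : ograph) :
  exists p : {poly rat}, forall t, p.[t%:R] = (cntG G t)%:R.
Proof.
apply: (@rep_polyf (nv G).+1); apply: cnt_rep.
by rewrite cardsT card_ord.
Qed.

Definition pG G := proj1_sig (constructive_indefinite_description _ (polyG G)).
Lemma pGE G t : (pG G).[t%:R] = (cntG G t)%:R.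
Proof. exact: (proj2_sig (constructive_indefinite_description _ (polyG G))). Qed.
Definition eta G := (pG G)`_1.

Lemma ltngt_cases (m k : nat) :
  [\/ (m < k)%N /\ (k < m)%N = false /\ (m == k) = false,
      (k < m)%N /\ (m < k)%N = false /\ (m == k) = false |
      (m == k) /\ (m < k)%N = false /\ (k < m)%N = false].
Proof.
by case: ltngtP => h; [apply: Or31|apply: Or32|apply: Or33].
Qed.

Lemma ord_eqE t (i j : 'I_t) : (i == j) = (nat_of_ord i == nat_of_ord j).
Proof. by []. Qed.

Theorem lemma11p1 :
  exists eta : ograph -> rat,
  [/\ (forall T1 T2, is_otree T1 -> is_otree T2 -> oiso T1 T2 -> eta T1 = eta T2),
      (forall T, is_otree T -> nv T = 1%N -> #|ed T| = 0%N -> eta T = 1),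
      (forall (T : ograph) (a b : 'I_(nv T)) (U : ograph),
          is_otree T -> (a, b) \in ed T -> contract_edge a b U ->
          eta T + eta (reverse_edge a b) + eta U = 0)
    & (forall (T : ograph) (a b c : 'I_(nv T)) (U : ograph),
          is_otree T -> (a, b) \in ed T -> (a, c) \in ed T -> b != c ->
          identify_ends b c U ->
          eta T = eta (replace_edge a c b c) + eta (replace_edge a b c b) + eta U) ].
Proof.
exists eta; split.
- move=> T1 T2 _ _ iso; rewrite /eta.
  have -> // : pG T1 = pG T2.
  apply: poly_nat_eq => t; rewrite !pGE /cntG.
  by rewrite (cnt_iso t iso).
- move=> T _ n1 e0; rewrite /eta.
  have -> : pG T = 'X.
    apply: poly_nat_eq => t; rewrite pGE hornerX /cntG cnt_pt //.
    by apply/eqP; rewrite -cards_eq0 e0.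
  by rewrite coefX.
- move=> T a b U tree abE cU.
  set F := ed T :\ (a, b).
  have split t : (cntG T t + cntG (reverse_edge a b) t + cntG U t = cnt F setT t)%N.
    rewrite /cntG -(quot_cnt t cU) /cnt !card_sum -!big_split /=.
    apply: eq_bigr => x _; rewrite !goodT (okED1 x abE) okEU1 /=.
    case: (posf x) => //=; case: (okE F x); rewrite ?andbF ?andbT //=.
    by rewrite ord_eqE; case: (ltngt_cases (x a) (x b)) => [[-> [-> ->]]|[-> [-> ->]]|[-> [-> ->]]].
  set A := [set v | connect (@uadj (@OGraph (nv T) F)) a v].
  have noc e : e \in F -> (e.1 \in A) = (e.2 \in A).
    move=> eF; rewrite !inE; apply/idP/idP => h; apply: (connect_trans h);
      apply: connect1; by rewrite /uadj /= -surjective_pairing eF ?orbT.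
  have aA : a \in A by rewrite inE connect0.
  have bA : b \in ~: A by rewrite !inE; apply: tree_cut.
  have [pA HA] : polyf (fun t => ((cnt F A t)%:R)).
    apply: rep_polyf; apply: (@cnt_rep _ F (nv T).+1).
    by rewrite (leq_ltn_trans (max_card _)) // card_ord.
  have [pB HB] : polyf (fun t => ((cnt F (~: A) t)%:R)).
    apply: rep_polyf; apply: (@cnt_rep _ F (nv T).+1).
    by rewrite (leq_ltn_trans (max_card _)) // card_ord.
  have HP : pG T + pG (reverse_edge a b) + pG U = pA * pB.
    apply: poly_nat_eq => t; rewrite !hornerD hornerM !pGE HA HB -!natrD -natrM.
    by rewrite split (cnt_prod t noc).
  rewrite /eta -!coefD HP coefM !big_ord_recr big_ord0 /= add0r.
  have -> : pA`_0 = 0.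
    by have h := HA 0%N; rewrite (@cnt_zero _ F A a aA) !mulr0n horner_coef0 in h.
  have -> : pB`_0 = 0.
    by have h := HB 0%N; rewrite (@cnt_zero _ F (~: A) b bA) !mulr0n horner_coef0 in h.
  by rewrite mulr0 mul0r addr0.
- move=> T a b c U tree abE acE bc iU.
  rewrite /eta -!coefD.
  have -> // : pG T = pG (replace_edge a c b c) + pG (replace_edge a b c b) + pG U.
  apply: poly_nat_eq => t.
  rewrite !hornerD !pGE -!natrD; congr (_%:R).
  rewrite /cntG -(quot_cnt t iU) /cnt !card_sum -!big_split /=.
  apply: eq_bigr => x _; rewrite !goodT !okEU1 /=.
  have abE' : (a, b) \in ed T :\ (a, c) by rewrite !inE abE andbT xpair_eqE eqxx /=.
  have acE' : (a, c) \in ed T :\ (a, b) by rewrite !inE acE andbT xpair_eqE eqxx /= eq_sym.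
  rewrite (okED1 x acE) (okED1 x abE') (okED1 x acE') /=.
  have -> : ed T :\ (a, b) :\ (a, c) = ed T :\ (a, c) :\ (a, b).
    by apply/setP => e; rewrite !inE; case: (e == (a, b)); case: (e == (a, c)).
  case: (posf x) => //=; case: (okE (ed T :\ (a, c) :\ (a, b)) x); rewrite ?andbF //=.
  rewrite ord_eqE.
  case: (ltngt_cases (x b) (x c)) => [[h1 [-> ->]]|[h1 [-> ->]]|[h [-> ->]]] /=.
  + rewrite h1 ?andbF ?andbT ?addn0.
    case Hab: (x a < x b)%N; rewrite ?andbF ?andbT //.
    by rewrite (ltn_trans Hab h1).
  + rewrite h1 ?andbF ?andbT ?addn0 ?add0n.
    case Hac: (x a < x c)%N; rewrite ?andbF ?andbT //.
    by rewrite (ltn_trans Hac h1).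
  + by rewrite h ?andbT ?add0n; case: (x a < x c)%N; case: (x a < x b)%N.
Qed.
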